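(* Let $\epsilon \in (0,\exp(-2))$, let $G$ be an abelian group, and let $A \subset G$ be a non-empty finite distributional $\epsilon$-approximate group. Then \[\Delta \mathbb{H}(A) \le 2\epsilon \log (\epsilon^{-1}|A|).\]
   Context: $\log$ is the natural logarithm. For a random variable $X$ with finite range $R$ (the set of values taken with positive probability), its Shannon entropy is $\mathbb{H}(X) = -\sum_{x\in R}\mathbb{P}(X=x)\log \mathbb{P}(X=x)$. For a non-empty finite set $A$, $U_A$ denotes a random variable uniformly distributed on $A$. In expressions such as $U_A+U_A$ the two summands are independent copies. For a non-empty finite subset $A$ of an abelian group, $\Delta\mathbb{H}(A) := \mathbb{H}(U_A+U_A) - \mathbb{H}(U_A)$. Definition: for $\epsilon>0$, an abelian group $G$ and a non-empty finite subset $A$ of $G$, $A$ is a distributional $\epsilon$-approximate group of $G$ if there exists a subset $U \subset G$ with $|U| = |A|$ such that the proportion of pairs $(a,b) \in A \times A$ with $a+b \in U$ is at least $1-\epsilon$. *)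

(* Defs.v *)
From HB Require Import structures.
From mathcomp Require Import all_boot all_order all_algebra.
From mathcomp Require Import finmap.
From mathcomp Require Import all_classical all_reals sequences exp.
Set Implicit Arguments. Unset Strict Implicit. Unset Printing Implicit Defensive.
Import Order.TTheory GRing.Theory Num.Theory.
Local Open Scope ring_scope.
Local Open Scope fset_scope.

Definition entropy (R : realType) (G : choiceType) (S : {fset G}) (p : G -> R) : R :=
  - \sum_(x <- S | 0 < p x) p x * ln (p x).

Definition unif_law (R : realType) (G : choiceType) (A : {fset G}) (x : G) : R :=
  if x \in A then (#|` A|%:R)^-1 else 0.

(* law of U_A + U_A (independent copies) *)
Definition sum_law (R : realType) (G : zmodType) (A : {fset G}) (x : G) : R :=
  (\sum_(a <- A) \sum_(b <- A) (a + b == x)%:R) / (#|` A|%:R ^+ 2).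

Definition sumset (G : zmodType) (A : {fset G}) : {fset G} :=
  [fset (a + b)%R | a in A, b in A].

Definition H_UA (R : realType) (G : choiceType) (A : {fset G}) : R :=
  entropy A (@unif_law R G A).

Definition H_UAplusUA (R : realType) (G : zmodType) (A : {fset G}) : R :=
  entropy (sumset A) (@sum_law R G A).

Definition DeltaH (R : realType) (G : zmodType) (A : {fset G}) : R :=
  H_UAplusUA R A - H_UA R A.

Definition distr_approx_group (R : realType) (G : zmodType) (eps : R) (A : {fset G}) : Prop :=
  exists U : {fset G}, #|` U| = #|` A| /\
    1 - eps <= (\sum_(a <- A) \sum_(b <- A) (a + b \in U)%:R) / (#|` A|%:R ^+ 2).

(* Main.v *)
Require Import Defs.
From HB Require Import structures.
From mathcomp Require Import all_boot all_order all_algebra.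
From mathcomp Require Import finmap.
From mathcomp Require Import all_classical all_reals sequences exp.
From mathcomp Require Import ring lra.
Import Order.TTheory GRing.Theory Num.Theory.
Local Open Scope ring_scope.
Local Open Scope fset_scope.

Lemma term_le (R : realType) (p w : R) : 0 < p -> 0 < w ->
  - (p * ln p) <= - (p * ln w) + w - p.
Proof.
move=> p0 w0.
have h := @le_ln1Dx R (w / p - 1).
have : -1 < w / p - 1 by have := divr_gt0 w0 p0; lra.
move/h; rewrite addrC subrK ln_div ?posrE // => H.
have := ler_wpM2l (ltW p0) H.
rewrite mulrBr mulrBr mulr1 mulrCA divff ?gt_eqF // mulr1.
lra.
Qed.

Lemma gibbs (R : realType) (G : choiceType) (S : seq G) (p w : G -> R) :
  (forall x, x \in S -> 0 <= p x) -> (forall x, x \in S -> 0 < w x) ->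
  - \sum_(x <- S | 0 < p x) p x * ln (p x) <=
  \sum_(x <- S) (- (p x * ln (w x)) + w x - p x).
Proof.
move=> hp hw; rewrite -sumrN big_mkcond /= big_seq_cond [X in _ <= X]big_seq_cond.
apply: ler_sum => x /andP[xS _].
case: ifP => px.
  by apply: term_le => //; apply: hw.
have -> : p x = 0.
  by apply/eqP; rewrite eq_le hp // andbT leNgt px.
by rewrite mul0r oppr0 add0r addr0 ltW // hw.
Qed.

Lemma sum_pick (R : realType) (G : eqType) (S : seq G) (y : G) (f : G -> R) :
  uniq S -> y \in S -> \sum_(x <- S) f x * (y == x)%:R = f y.
Proof.
move=> uS yS; rewrite (big_rem y) //= eqxx mulr1 big1_seq ?addr0 // => x /andP[_ xr].
have : y != x by apply: contraTneq xr => <-; rewrite mem_rem_uniqF.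
by move/negbTE ->; rewrite mulr0.
Qed.

Lemma sum_const_seq (R : realType) (G : eqType) (s : seq G) (k : R) :
  \sum_(x <- s) k = (size s)%:R * k.
Proof.
elim: s => [|y s IH]; first by rewrite big_nil mul0r.
by rewrite big_cons IH /= -add1n natrD mulrDl mul1r.
Qed.

Lemma sum_mem_count (R : realType) (G : eqType) (s : seq G) (P : pred G) :
  \sum_(x <- s) (P x)%:R = (count P s)%:R :> R.
Proof.
elim: s => [|y s IH]; first by rewrite big_nil.
by rewrite big_cons IH /= natrD.
Qed.

Lemma transfer (R : realType) (G : zmodType) (A : {fset G}) (f : G -> R) :
  \sum_(x <- sumset A) f x * (\sum_(a <- A) \sum_(b <- A) (a + b == x)%:R) =
  \sum_(a <- A) \sum_(b <- A) f (a + b).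
Proof.
under eq_bigr do rewrite mulr_sumr.
rewrite exchange_big; apply: eq_big_seq => a aA.
under eq_bigr do rewrite mulr_sumr.
rewrite exchange_big; apply: eq_big_seq => b bA.
apply: sum_pick; first exact: fset_uniq.
by apply/imfset2P; exists a => //; exists b.
Qed.

Lemma count_ge1 (R : realType) (G : zmodType) (A : {fset G}) x :
  x \in sumset A -> 1 <= \sum_(a <- A) \sum_(b <- A) (a + b == x)%:R :> R.
Proof.
case/imfset2P => a aA [b bA ->].
rewrite (bigD1_seq a) //= ?fset_uniq // (bigD1_seq b) //= ?fset_uniq // eqxx.
rewrite -addrA lerDl addr_ge0 // sumr_ge0 // => i _; rewrite sumr_ge0 //.
Qed.

Lemma sum_in_le (R : realType) (G : choiceType) (S U : {fset G}) :
  \sum_(x <- S) (x \in U)%:R <= #|` U|%:R :> R.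
Proof.
rewrite (@sum_mem_count R G S (fun x => x \in U)) ler_nat -size_filter.
apply: uniq_leq_size; first by rewrite filter_uniq // fset_uniq.
by move=> x; rewrite mem_filter => /andP[].
Qed.

Theorem mainTheorem2 (R : realType) (G : zmodType) (eps : R) (A : {fset G}) :
  0 < eps -> eps < expR (-2) ->
  A != fset0 ->
  distr_approx_group eps A ->
  DeltaH R A <= 2 * eps * ln (eps^-1 * #|` A|%:R).
Proof.
move=> e0 e1 A0 [U [cardU hU]].
set n : R := #|` A|%:R.
have n1 : 1 <= n by rewrite /n ler1n cardfs_gt0.
have n0 : 0 < n by lra.
set c := fun x => \sum_(a <- A) \sum_(b <- A) (a + b == x)%:R : R.
have n20 : 0 < n ^+ 2 by rewrite exprn_gt0.
have transp : forall f : G -> R, \sum_(x <- sumset A) f x * sum_law R A x =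
    (\sum_(a <- A) \sum_(b <- A) f (a + b)) / n ^+ 2.
  move=> f; rewrite -(@transfer R G A f) mulr_suml; apply: eq_bigr => x _.
  by rewrite /sum_law mulrA.
have sum1 : \sum_(a <- A) \sum_(b <- A) (1 : R) = n * n.
  by rewrite (eq_bigr (fun _ => n * 1)) ?sum_const_seq ?mulr1 // => a _; rewrite sum_const_seq mulr1.
have Sp : \sum_(x <- sumset A) sum_law R A x = 1.
  have := transp (fun _ => 1); under eq_bigr do rewrite mul1r.
  by move=> ->; rewrite sum1 expr2 divff // gt_eqF.
set d := \sum_(x <- sumset A) (x \notin U)%:R * sum_law R A x.
have de : d <= eps.
  rewrite /d transp.
  have -> : \sum_(a <- A) \sum_(b <- A) ((a + b) \notin U)%:R =
           n * n - \sum_(a <- A) \sum_(b <- A) ((a + b) \in U)%:R :> R.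
    rewrite -sum1 -sumrB; apply: eq_bigr => a _; rewrite -sumrB; apply: eq_bigr => b _.
    by case: (_ \in U); rewrite ?subrr ?subr0.
  rewrite mulrBl -expr2 divff ?gt_eqF //; lra.
have p0 : forall x, 0 <= sum_law R A x.
  move=> x; apply: divr_ge0; [apply: sumr_ge0 => a _; apply: sumr_ge0 => b _; exact: ler0n | exact: ltW n20].
have e2 : eps < 1.
  have : expR (-2) < expR 0 :> R by rewrite ltr_expR; lra.
  rewrite expR0.
  lra.
set M := ln (eps^-1 * n).
have M1 : 1 <= M.
  rewrite /M lnM ?posrE ?invr_gt0 // lnV ?posrE //.
  have : ln eps < -2.
    by rewrite -[X in _ < X]expRK ltr_ln ?posrE ?expR_gt0.
  have := ln_ge0 n1; lra.
set w := fun x => if x \in U then n^-1 else eps / n ^+ 2.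
have w0 : forall x, 0 < w x.
  by move=> x; rewrite /w; case: ifP => _; [rewrite invr_gt0 | rewrite divr_gt0].
have H1 := @gibbs R G (sumset A) (sum_law R A) w (fun x _ => p0 x) (fun x _ => w0 x).
have lnw : forall x, - (sum_law R A x * ln (w x)) =
    (ln n * sum_law R A x + M * ((x \notin U)%:R * sum_law R A x))%R.
  move=> x; rewrite /w /M; case: (x \in U) => /=.
    by rewrite lnV ?posrE //; ring.
  rewrite ln_div ?posrE // lnXn // lnM ?posrE ?invr_gt0 // lnV ?posrE //.
  rewrite mulr2n; ring.
have Sw : \sum_(x <- sumset A) w x <= (1 + eps)%R.
  apply: (@le_trans _ _ (\sum_(x <- sumset A) ((x \in U)%:R * n^-1 + eps * sum_law R A x)%R)).
    rewrite big_seq [X in _ <= X]big_seq; apply: ler_sum => x xS.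
    rewrite /w; case: ifP => _ /=.
      by rewrite mul1r lerDl mulr_ge0 // ltW.
    rewrite mul0r add0r /sum_law mulrA ler_pM2r ?invr_gt0 //.
    by rewrite -[X in X <= _]mulr1 ler_pM2l //; apply: count_ge1.
  rewrite big_split /= -mulr_suml -mulr_sumr Sp mulr1 lerD2r.
  have := @sum_in_le R G (sumset A) U; rewrite cardU -/n => h.
  by rewrite ler_pdivrMr // mul1r.
rewrite /DeltaH /H_UAplusUA /H_UA.
have HA : entropy A (@unif_law R G A) = ln n.
  rewrite /entropy big_mkcond /= big_seq.
  rewrite (eq_bigr (fun _ => n^-1 * ln n^-1)); last first.
    by move=> x xA; rewrite /unif_law xA -/n invr_gt0 n0.
  rewrite -big_seq sum_const_seq -/n mulrA mulrV ?unitfE ?(lt0r_neq0 n0) // mul1r lnV ?posrE // opprK //.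
rewrite HA.
have HS : entropy (sumset A) (sum_law R A) <= (ln n + M * d + eps)%R.
  apply: (le_trans H1).
  rewrite big_split /= sumrN big_split /= Sp.
  under eq_bigr do rewrite lnw.
  rewrite big_split /= -!mulr_sumr Sp -/d mulr1.
  lra.
have : M * d <= M * eps by rewrite ler_wpM2l //; lra.
have : eps <= eps * M by rewrite -[X in X <= _]mulr1 ler_wpM2l //; lra.
rewrite -/M.
lra.
Qed.
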